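(* Let $G$ be an $r$-regular graph on $n$ vertices, where $n$ is even, and let $A$ be an Abelian group of order $n$ having exactly one involution (element of order 2). If $G$ is $A$-distance antimagic, then $r$ is odd.
   Context: All groups are finite Abelian, written additively. Let $G$ be a finite simple graph with $n$ vertices and $A$ an Abelian group of order $n$. For a bijection $f: V(G)\to A$, the weight of a vertex $x$ is $w_f(x)=\sum_{y\in N(x)} f(y)$, computed in $A$, where $N(x)$ is the open neighbourhood of $x$. $f$ is an $A$-distance antimagic labelling if the weights of all vertices are pairwise distinct; $f$ is an $A$-distance magic labelling if all vertices have the same weight (the magic constant). $G$ is $A$-distance antimagic (resp. magic) if it admits such a labelling. *)

(* Defs.v *)
From HB Require Import structures.
From mathcomp Require Import all_boot all_order all_algebra.
Set Implicit Arguments. Unset Strict Implicit. Unset Printing Implicit Defensive.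
Import GRing.Theory.
Local Open Scope ring_scope.

Definition simple_graph (V : finType) (e : rel V) : Prop :=
  symmetric e /\ irreflexive e.

Definition nbhd (V : finType) (e : rel V) (x : V) : {set V} := [set y | e x y].

Definition regular (V : finType) (e : rel V) (r : nat) : Prop :=
  forall x : V, #|nbhd e x| = r.

Definition weight (V : finType) (A : zmodType) (e : rel V) (f : V -> A) (x : V) : A :=
  \sum_(y in nbhd e x) f y.

Definition distance_antimagic_labelling (V : finType) (A : finZmodType)
    (e : rel V) (f : V -> A) : Prop :=
  bijective f /\ injective (weight e f).

Definition distance_antimagic (V : finType) (A : finZmodType) (e : rel V) : Prop :=
  exists f : V -> A, distance_antimagic_labelling e f.

Definition involutions (A : finZmodType) : {set A} :=
  [set a : A | (a != 0) && (a + a == 0)].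

(* Main.v *)
Require Import Defs.
From HB Require Import structures.
From mathcomp Require Import all_boot all_order all_algebra.
Import GRing.Theory.
Section aux.
Local Open Scope ring_scope.

Lemma sum_pairs (A : finZmodType) :
  (\sum_(a : A | ~~ (a + a == 0)) a = 0)%R.
Proof.
pose rk := @enum_rank A.
rewrite (bigID (fun a : A => (rk a < rk (- a))%N)) /=.
set X := (\sum_(a | _ && (rk a < rk (- a))%N) a)%R.
have -> : (\sum_(a : A | ~~ (a + a == 0) && ~~ (rk a < rk (- a))%N) a = - X)%R.
  rewrite (reindex_inj (@GRing.oppr_inj A)) /= sumrN; congr (- _)%R.
  apply: eq_bigl => a; rewrite GRing.opprK -GRing.opprD GRing.oppr_eq0.
  case h: (a + a == 0)%R => //=.
  have hne : rk a != rk (- a).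
    apply/negP => /eqP /enum_rank_inj ha.
    by move: h; rewrite {2}ha GRing.subrr eqxx.
  rewrite -leqNgt leq_eqVlt; apply/orP/idP => [[/eqP E|//]|H]; last by right.
  by move: hne; rewrite -(inj_eq val_inj) /= E eqxx.
by rewrite GRing.subrr.
Qed.

Lemma sumA_invol (A : finZmodType) (t : A) :
  involutions A = [set t] -> (\sum_(a : A) a = t)%R.
Proof.
move=> hI.
rewrite (bigID (fun a : A => (a + a == 0)%R)) /= sum_pairs GRing.addr0.
rewrite (bigD1 0%R) /=; last by rewrite GRing.addr0.
rewrite GRing.add0r.
rewrite (eq_bigl (fun a => a \in involutions A)); last by move=> a; rewrite inE andbC.
by rewrite hI big_set1.
Qed.

End aux.

Theorem mainTheorem1 (V : finType) (e : rel V) (A : finZmodType) (r : nat) :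
  simple_graph e ->
  regular e r ->
  ~~ odd #|V| ->
  #|A| = #|V| ->
  #|involutions A| = 1%N ->
  distance_antimagic A e ->
  odd r.
Proof.
move=> [sym irr] reg hodd hcard hinv [f [fbij winj]].
have [t ht] := cards1P (introT eqP hinv).
have hS := @sumA_invol A t ht.
have wbij : bijective (weight e f) by apply: inj_card_bij => //; rewrite hcard.
have h1 : (\sum_(a : A) a = \sum_(x : V) weight e f x)%R.
  by rewrite (reindex (weight e f)) //; apply: onW_bij.
have h2 : (\sum_(a : A) a = \sum_(x : V) f x)%R.
  by rewrite (reindex f) //; apply: onW_bij.
have h3 : (\sum_(x : V) weight e f x = (\sum_(y : V) f y) *+ r)%R.
  rewrite /weight.
  under eq_bigr => x _ do rewrite big_mkcond.
  rewrite exchange_big /= -GRing.sumrMnl; apply: eq_bigr => y _.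
  rewrite -big_mkcond /=.
  rewrite (eq_bigl (fun x => x \in nbhd e y)); last by move=> x; rewrite !inE sym.
  by rewrite GRing.sumr_const reg.
rewrite -h2 hS in h3; rewrite -h1 hS in h3.
case hr: (odd r) => //.
have tin : t \in involutions A by rewrite ht set11.
move: tin; rewrite inE => /andP [tn0 tt].
have := odd_double_half r; rewrite hr add0n => hr2.
move: h3; rewrite -hr2 -mul2n GRing.mulrnA GRing.mulr2n (eqP tt) GRing.mul0rn => h.
by move: tn0; rewrite h eqxx.
Qed.
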